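(* If a graph $G$ with at least two vertices belongs to $\mathcal{S}_3$, then $|E(G)|\ge 3|V(G)|-2$.
   Context: Graphs may have parallel edges but no loops. $G\in\mathcal{S}_3$ means: for every $\beta:V(G)\to\mathbb{Z}_3$ with $\sum_v\beta(v)\equiv0\pmod3$ there is a strongly-connected orientation $D$ of $G$ with $d^+_D(v)-d^-_D(v)\equiv\beta(v)\pmod3$ for all $v$. *)

(* Defs.v *)
From HB Require Import structures.
From mathcomp Require Import all_boot all_order all_algebra.
Set Implicit Arguments. Unset Strict Implicit. Unset Printing Implicit Defensive.
Import GRing.Theory.

(* A multigraph (parallel edges allowed) on vertex set V with edge set E:
   each edge e has endpoints (ends e).1 and (ends e).2. *)
Definition loopless (V E : finType) (ends : E -> V * V) : Prop :=
  forall e, (ends e).1 != (ends e).2.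

Definition tail (V E : finType) (ends : E -> V * V) (D : E -> bool) (e : E) : V :=
  if D e then (ends e).1 else (ends e).2.
Definition head (V E : finType) (ends : E -> V * V) (D : E -> bool) (e : E) : V :=
  if D e then (ends e).2 else (ends e).1.

Definition outdeg (V E : finType) (ends : E -> V * V) (D : E -> bool) (v : V) : nat :=
  #|[set e | tail ends D e == v]|.
Definition indeg (V E : finType) (ends : E -> V * V) (D : E -> bool) (v : V) : nat :=
  #|[set e | head ends D e == v]|.

Definition arc (V E : finType) (ends : E -> V * V) (D : E -> bool) : rel V :=
  fun u w => [exists e, (tail ends D e == u) && (head ends D e == w)].

Definition strongly_connected (V E : finType) (ends : E -> V * V) (D : E -> bool) : Prop :=
  forall u w : V, connect (arc ends D) u w.

Definition in_S3 (V E : finType) (ends : E -> V * V) : Prop :=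
  forall beta : V -> 'Z_3, (\sum_(v : V) beta v = 0)%R ->
    exists D : E -> bool, strongly_connected ends D /\
      forall v : V, ((outdeg ends D v)%:R - (indeg ends D v)%:R = beta v :> 'Z_3)%R.

(* Main.v *)
Require Import Defs.
From HB Require Import structures.
From mathcomp Require Import all_boot all_order all_algebra.
From mathcomp Require Import zify ring.
Import GRing.Theory.

Lemma card_sum (E : finType) (P : pred E) :
  #|[set e | P e]| = \sum_(e : E) (P e : nat).
Proof.
rewrite -sum1dep_card big_mkcond /=; apply: eq_bigr => e _; by case: (P e).
Qed.

Lemma sum_card_fib (V E : finType) (f : E -> V) :
  \sum_(v : V) #|[set e | f e == v]| = #|E|.
Proof.
under eq_bigr do rewrite card_sum.
rewrite exchange_big /= -sum1_card; apply: eq_bigr => e _.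
rewrite -big_mkcond /=.
by rewrite (big_pred1 (f e)) // => v; rewrite /= eq_sym.
Qed.

Lemma deg_inv (V E : finType) (ends : E -> V * V) (D : E -> bool) v :
  outdeg ends D v + indeg ends D v =
  outdeg ends (fun _ => true) v + indeg ends (fun _ => true) v.
Proof.
rewrite /outdeg /indeg !card_sum -!big_split /=; apply: eq_bigr => e _.
rewrite /tail /Defs.head /=; case: (D e) => //=; by rewrite addnC.
Qed.

Lemma key3 (o i r : 'Z_3) : (o - i = -(o + i) - r)%R -> o = r.
Proof.
move=> H.
have -> : r = (-(o+i) - (o - i))%R by rewrite H; ring.
have h3 : ((3%:R)%R : 'Z_3) = 0%R by apply: val_inj.
transitivity (o - o * (3%:R)%R)%R; first by rewrite h3 mulr0 subr0.
ring.
Qed.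

Theorem mainTheorem7 (V E : finType) (ends : E -> V * V) :
  loopless ends -> 2 <= #|V| -> in_S3 ends -> 3 * #|V| - 2 <= #|E|.
Proof.
move=> Hl Hn HS.
have [u _] : exists u : V, u \in V by apply/card_gt0P; exact: leq_trans Hn.
pose deg v := outdeg ends (fun _ => true) v + indeg ends (fun _ => true) v.
pose r v : 'Z_3 := if v == u then (#|E|%:R)%R else 0%R.
pose beta v : 'Z_3 := (- (deg v)%:R - r v)%R.
have sdeg : \sum_v deg v = (#|E| + #|E|)%N.
  by rewrite big_split /= !sum_card_fib.
have sbeta : (\sum_v beta v = 0)%R.
  rewrite big_split /= sumrN -natr_sum sdeg.
  rewrite sumrN /r -big_mkcond /= big_pred1_eq -opprD -natrD.
  have -> : (#|E| + #|E| + #|E| = 3 * #|E|)%N by lia.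
  rewrite natrM.
  have h3 : ((3%:R)%R : 'Z_3) = 0%R by apply: val_inj.
  by rewrite h3 mul0r oppr0.
have [D [HSC Hb]] := HS beta sbeta.
have Hr v : ((outdeg ends D v)%:R = r v :> 'Z_3)%R.
  apply: (@key3 _ ((indeg ends D v)%:R)%R).
  by rewrite Hb /beta /deg -(@deg_inv V E ends D v) natrD.
have Hpos v : 1 <= outdeg ends D v.
  have : 0 < #|predC1 v| by rewrite cardC1; lia.
  case/card_gt0P => w; rewrite inE => wv.
  case/connectP: (HSC v w) => [[|y p]] /=; first by move=> _ wE; rewrite wE eqxx in wv.
  case/andP => /existsP [e /andP [/eqP te _]] _ _.
  apply/card_gt0P; exists e; by rewrite inE te.
have Hout v : v != u -> 3 <= outdeg ends D v.
  move=> vu; have := Hr v; rewrite /r (negbTE vu) => /(congr1 (@nat_of_ord _)).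
  rewrite val_Zp_nat //= => h; have := Hpos v; lia.
have sout : \sum_v outdeg ends D v = #|E| by apply: sum_card_fib.
rewrite -sout (bigD1 u) //=.
have : \sum_(v | v != u) 3 <= \sum_(v | v != u) outdeg ends D v.
  by apply: leq_sum => v vu; apply: Hout.
rewrite sum_nat_const cardC1 => h.
have := Hpos u; move: h Hn; set S := \sum_(i | _) _; set a := outdeg _ _ u. set n := #|V|. move=> h1 h2 h3; have e1 : n.-1 = n - 1 by rewrite subn1. rewrite e1 in h1; lia.
Qed.
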